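(* If $q$ is a prime power, then there exists a $(q,q^2+1;8)$-bipartite biregular graph of order $(q^2+q+1)(q^3-q)$.
   Context: For integers $a,b\geq 2$ and even $g\ge4$, an $(a,b;g)$-bipartite biregular graph is a finite simple bipartite graph of girth exactly $g$ in which all vertices of one bipartition class have degree $a$ and all vertices of the other class have degree $b$. *)

(* Defs.v *)
From mathcomp Require Import all_boot.
Set Implicit Arguments. Unset Strict Implicit. Unset Printing Implicit Defensive.

Definition simple_graph (V : finType) (e : rel V) : Prop :=
  symmetric e /\ irreflexive e.

Definition deg (V : finType) (e : rel V) (x : V) : nat := #|[set y | e x y]|.

Definition is_cycle (V : finType) (e : rel V) (c : seq V) : Prop :=
  3 <= size c /\ ucycle e c.

Definition has_girth (V : finType) (e : rel V) (g : nat) : Prop :=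
  (exists c, is_cycle e c /\ size c = g) /\
  (forall c, is_cycle e c -> g <= size c).

Definition bipartite_biregular (V : finType) (e : rel V) (a b g : nat) : Prop :=
  simple_graph e /\
  exists A : {set V},
    (forall x y, e x y -> (x \in A) != (y \in A)) /\
    (forall x, x \in A -> deg e x = a) /\
    (forall x, x \notin A -> deg e x = b) /\
    has_girth e g.

Definition prime_power (q : nat) : Prop :=
  exists p k, prime p /\ 0 < k /\ q = p ^ k.

(* Main.v *)
Require Import Defs.
From mathcomp Require Import all_boot.
From mathcomp Require Import all_algebra all_field.
From mathcomp Require Import ring zify.
Set Implicit Arguments. Unset Strict Implicit. Unset Printing Implicit Defensive.
Import GRing.Theory.
Local Open Scope ring_scope.

Section Geo.
Variable F : finFieldType.
Variable c : F.
Hypothesis Hc : forall x : F, x * x + x + c != 0.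

Definition N (u v : F) : F := u * u + u * v + c * (v * v).
Definition BN (u v x y : F) : F := 2 * u * x + u * y + v * x + 2 * c * v * y.

Lemma N_aniso u v : N u v = 0 -> u = 0 /\ v = 0.
Proof.
move=> H; have [v0|vn0] := eqVneq v 0.
  subst v; move: H; rewrite /N !mulr0 !addr0 => /eqP; rewrite mulf_eq0 orbb => /eqP; done.
exfalso; move: (Hc (u / v)) => /eqP; apply.
have E : u / v * (u / v) + u / v + c = N u v / (v * v) by rewrite /N; field.
by rewrite E H mul0r.
Qed.

Lemma N_neq0 u v : (u != 0) || (v != 0) -> N u v != 0.
Proof. case/orP=> H; apply/eqP=> /N_aniso [h1 h2]; by rewrite ?h1 ?h2 eqxx in H. Qed.

Definition A4 := (F * F * F * F)%type.
Definition dir (p : option (F * F)) : A4 :=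
  match p with Some z => (1, z.1, z.2, N z.1 z.2) | None => (0, 0, 0, 1) end.
Definition addt (a : A4) (t : F) (d : A4) : A4 :=
  (a.1.1.1 + t * d.1.1.1, a.1.1.2 + t * d.1.1.2, a.1.2 + t * d.1.2, a.2 + t * d.2).
Definition rep (a : A4) (p : option (F * F)) : F * F * F :=
  match p with
  | Some z => (a.1.1.2 - a.1.1.1 * z.1, a.1.2 - a.1.1.1 * z.2, a.2 - a.1.1.1 * N z.1 z.2)
  | None => (a.1.1.2, a.1.2, a.1.1.1)
  end.
Definition sol (z : F * F) (w : F * F * F) : F := w.2 - BN z.1 z.2 w.1.1 w.1.2.

Definition Pt := (A4 + (F * F * F))%type.
Definition Ln := ((option (F * F) * (F * F * F)) + (F * F))%type.

Definition inc (P : Pt) (L : Ln) : bool :=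
  match P, L with
  | inl a, inl (p, w) => rep a p == w
  | inr (z, k), inl (Some z', w) => (z' == z) && (sol z w == k)
  | inr (z, _), inr z' => z' == z
  | _, _ => false
  end.

Definition coef (a b : A4) (p : option (F * F)) : F :=
  match p with Some _ => b.1.1.1 - a.1.1.1 | None => b.2 - a.2 end.

Lemma rep_eq a b p : rep a p = rep b p -> b = addt a (coef a b p) (dir p).
Proof.
case: a b => [[[a0 a1] a2] a3] [[[b0 b1] b2] b3].
case: p => [[u v]|] /=; case=> e1 e2 e3; rewrite /addt /=.
  congr (_, _, _, _); first (by rewrite mulr1 addrC subrK).
  - have -> : b1 = (b1 - b0 * u) + b0 * u by ring. rewrite -e1; ring.
  - have -> : b2 = (b2 - b0 * v) + b0 * v by ring. rewrite -e2; ring.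
  - have -> : b3 = (b3 - b0 * N u v) + b0 * N u v by ring. rewrite -e3; ring.
by rewrite e1 e2 e3 !mulr0 !addr0 mulr1 addrC subrK.
Qed.

Lemma rep_addt a t p : rep (addt a t (dir p)) p = rep a p.
Proof.
case: a => [[[a0 a1] a2] a3]; case: p => [[u v]|] /=; rewrite /addt /=;
  congr (_, _, _); ring.
Qed.

Lemma addt0 a d : addt a 0 d = a.
Proof. by case: a => [[[a0 a1] a2] a3]; rewrite /addt /= !mul0r !addr0. Qed.


Lemma rep_shift a t p p' : t != 0 -> rep (addt a t (dir p)) p' = rep a p' -> p = p'.
Proof.
case: a => [[[a0 a1] a2] a3] tn0.
case: p => [[u v]|]; case: p' => [[u' v']|] //=; rewrite /addt /=.
- case=> e1 e2 _.
  have h1 : t * (u - u') = 0.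
    have -> : t * (u - u') = (a1 + t * u - (a0 + t * 1) * u') - (a1 - a0 * u') by ring.
    by rewrite e1 subrr.
  have h2 : t * (v - v') = 0.
    have -> : t * (v - v') = (a2 + t * v - (a0 + t * 1) * v') - (a2 - a0 * v') by ring.
    by rewrite e2 subrr.
  move: h1 h2 => /eqP; rewrite mulf_eq0 (negbTE tn0) subr_eq0 => /eqP ->.
  by move=> /eqP; rewrite mulf_eq0 (negbTE tn0) subr_eq0 => /eqP ->.
- case=> _ _ e; exfalso; move/eqP: tn0; apply.
  have -> : t = (a0 + t * 1) - a0 by ring.
  by rewrite e subrr.
- case=> _ _ e; exfalso; move/eqP: tn0; apply.
  have : t = (a3 + t * 1 - (a0 + t * 0) * N u' v') - (a3 - a0 * N u' v') by ring.
  by rewrite e subrr.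
Qed.

Lemma no4 P1 P2 L1 L2 : P1 != P2 -> L1 != L2 ->
  inc P1 L1 -> inc P2 L1 -> inc P1 L2 -> inc P2 L2 -> False.
Proof.
case: P1 P2 => [a|[z k]] [b|[z' k']]; case: L1 => [[p w]|y]; case: L2 => [[p' w']|y'] //=.
- move=> nab nL /eqP h1 /eqP h2 /eqP h3 /eqP h4.
  have hb := rep_eq (etrans h1 (esym h2)).
  set t := coef a b p in hb.
  have tn0 : t != 0.
    by apply: contraNneq nab => t0; rewrite hb t0 addt0.
  have pp : p = p'.
    apply: (rep_shift (a:=a) tn0); by move: h4; rewrite hb => ->.
  by subst p'; move: nL; rewrite -h1 -h3 eqxx.
- case: p => [z1|] //; case: p' => [z2|] //.
  move=> _ nL /eqP h1 /andP[/eqP e1 _] /eqP h3 /andP[/eqP e2 _].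
  by move: nL; subst; rewrite eqxx.
- case: p => [z1|] //; case: p' => [z2|] //.
  move=> _ nL /andP[/eqP e1 _] /eqP h1 /andP[/eqP e2 _] /eqP h3.
  by move: nL; subst; rewrite eqxx.
- case: p => [z1|] //; case: p' => [z2|] //.
  move=> nP _ /andP[/eqP e1 /eqP s1] /andP[/eqP e2 /eqP s2] _ _.
  by move: nP; subst; rewrite eqxx.
- case: p => [z1|] //.
  move=> nP _ /andP[/eqP e1 /eqP s1] /andP[/eqP e2 /eqP s2] _ _.
  by move: nP; subst; rewrite eqxx.
- case: p' => [z1|] //.
  move=> nP _ _ _ /andP[/eqP e1 /eqP s1] /andP[/eqP e2 /eqP s2].
  by move: nP; subst; rewrite eqxx.
- by move=> _ nL /eqP e1 /eqP e2 /eqP e3 /eqP e4; move: nL; subst; rewrite eqxx.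
Qed.


Lemma shift0 (x y : F) : x + y = x -> y = 0.
Proof. by move=> h; rewrite -(addKr x y) h addNr. Qed.

Lemma mul_neq0 (x y : F) : x != 0 -> y != 0 -> x * y != 0.
Proof. by move=> hx hy; rewrite mulf_eq0 negb_or hx hy. Qed.

Lemma ovoid a p1 p2 p3 t1 t2 t3 : p1 != p2 -> p2 != p3 -> p3 != p1 ->
  t1 != 0 -> t2 != 0 -> t3 != 0 ->
  addt (addt (addt a t1 (dir p1)) t2 (dir p2)) t3 (dir p3) = a -> False.
Proof.
case: a => [[[a0 a1] a2] a3].
case: p1 => [[u1 v1]|]; case: p2 => [[u2 v2]|]; case: p3 => [[u3 v3]|];
  rewrite /addt /= ?eqxx //; move=> n12 n23 n31 h1 h2 h3; case.
- rewrite -!addrA => /shift0 s0 /shift0 s1 /shift0 s2 /shift0 s3.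
  have r : t3 = - t1 - t2.
    have -> : t3 = (t1 * 1 + (t2 * 1 + t3 * 1)) - t1 - t2 by ring.
    by rewrite s0 sub0r.
  have hu : t2 * u2 = t2 * u3 - t1 * (u1 - u3).
    apply/eqP; rewrite -subr_eq0; apply/eqP.
    by rewrite -s1 r; ring.
  have hv : t2 * v2 = t2 * v3 - t1 * (v1 - v3).
    apply/eqP; rewrite -subr_eq0; apply/eqP.
    by rewrite -s2 r; ring.
  have E : t2 * t1 * (t1 + t2) * N (u1 - u3) (v1 - v3) =
     t2 * t2 * t1 * N u1 v1 + t2 * N (t2 * u3 - t1 * (u1 - u3)) (t2 * v3 - t1 * (v1 - v3))
     - t2 * t2 * (t1 + t2) * N u3 v3 by rewrite /N; ring.
  rewrite -hu -hv in E.
  have E2 : t2 * t1 * (t1 + t2) * N (u1 - u3) (v1 - v3) = t2 * t2 * (t1 * N u1 v1 + (t2 * N u2 v2 + t3 * N u3 v3)).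
    by rewrite E r /N; ring.
  move: E2; rewrite s3 mulr0 => /eqP; apply/negP.
  have nt : t1 + t2 != 0.
    have -> : t1 + t2 = - t3 by rewrite r; ring.
    by rewrite oppr_eq0.
  apply: mul_neq0; first by apply: mul_neq0 => //; apply: mul_neq0.
  apply: N_neq0; apply: contraNT n31; rewrite negb_or !negbK !subr_eq0 => /andP[/eqP -> /eqP ->].
  by rewrite eqxx.
- rewrite -!addrA !mulr0 ?addr0 ?add0r !mulr1 => /shift0 s0 /shift0 s1 /shift0 s2 _.
  have e : t1 * (u1 - u2) = 0 /\ t1 * (v1 - v2) = 0.
    split.
    - have -> : t1 * (u1 - u2) = t1 * u1 + t2 * u2 - u2 * (t1 + t2) by ring.
      by rewrite s0 s1; ring.
    - have -> : t1 * (v1 - v2) = t1 * v1 + t2 * v2 - v2 * (t1 + t2) by ring.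
      by rewrite s0 s2; ring.
  case: e => /eqP; rewrite mulf_eq0 (negbTE h1) subr_eq0 => /eqP eu /eqP.
  rewrite mulf_eq0 (negbTE h1) subr_eq0 => /eqP ev.
  by rewrite eu ev eqxx in n12.
- rewrite -!addrA !mulr0 ?addr0 ?add0r !mulr1 => /shift0 s0 /shift0 s1 /shift0 s2 _.
  have e : t1 * (u1 - u3) = 0 /\ t1 * (v1 - v3) = 0.
    split.
    - have -> : t1 * (u1 - u3) = t1 * u1 + t3 * u3 - u3 * (t1 + t3) by ring.
      by rewrite s0 s1; ring.
    - have -> : t1 * (v1 - v3) = t1 * v1 + t3 * v3 - v3 * (t1 + t3) by ring.
      by rewrite s0 s2; ring.
  case: e => /eqP; rewrite mulf_eq0 (negbTE h1) subr_eq0 => /eqP eu /eqP.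
  rewrite mulf_eq0 (negbTE h1) subr_eq0 => /eqP ev.
  by rewrite eu ev eqxx in n31.
- rewrite -!addrA !mulr0 ?addr0 ?add0r !mulr1 => /shift0 s0 /shift0 s1 /shift0 s2 _.
  have e : t2 * (u2 - u3) = 0 /\ t2 * (v2 - v3) = 0.
    split.
    - have -> : t2 * (u2 - u3) = t2 * u2 + t3 * u3 - u3 * (t2 + t3) by ring.
      by rewrite s0 s1; ring.
    - have -> : t2 * (v2 - v3) = t2 * v2 + t3 * v3 - v3 * (t2 + t3) by ring.
      by rewrite s0 s2; ring.
  case: e => /eqP; rewrite mulf_eq0 (negbTE h2) subr_eq0 => /eqP eu /eqP.
  rewrite mulf_eq0 (negbTE h2) subr_eq0 => /eqP ev.
  by rewrite eu ev eqxx in n23.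
Qed.


Lemma sol_shift a t p z : sol z (rep (addt a t (dir p)) (Some z)) =
  sol z (rep a (Some z)) +
  t * (match p with Some z' => N (z'.1 - z.1) (z'.2 - z.2) | None => 1 end).
Proof.
case: a => [[[a0 a1] a2] a3]; case: z => u v; case: p => [[u' v']|];
  rewrite /sol /rep /addt /BN /= /N; ring.
Qed.

Inductive and8 (P1 P2 P3 P4 P5 P6 P7 P8 : Prop) : Prop :=
  And8 of P1 & P2 & P3 & P4 & P5 & P6 & P7 & P8.

Lemma and8P (b1 b2 b3 b4 b5 b6 b7 b8 : bool) :
  reflect (and8 b1 b2 b3 b4 b5 b6 b7 b8) [&& b1, b2, b3, b4, b5, b6, b7 & b8].
Proof.
by case: b1; case: b2; case: b3; case: b4; case: b5; case: b6; case: b7; case: b8;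
  constructor; try (by []); case.
Qed.

Definition tri P1 P2 P3 L1 L2 L3 :=
  [&& uniq [:: P1; P2; P3], uniq [:: L1; L2; L3], inc P1 L1, inc P2 L1,
      inc P2 L2, inc P3 L2, inc P3 L3 & inc P1 L3].

Lemma tri_rot P1 P2 P3 L1 L2 L3 : tri P1 P2 P3 L1 L2 L3 -> tri P2 P3 P1 L2 L3 L1.
Proof.
case/and8P=> u1 u2 i1 i2 i3 i4 i5 i6; apply/and8P; split => //.
- by move: u1; rewrite -(rot_uniq 1).
- by move: u2; rewrite -(rot_uniq 1).
Qed.

Lemma shift_ne a b p : a != b -> rep a p = rep b p -> coef a b p != 0.
Proof.
move=> nab h; have hb := rep_eq h.
by apply: contraNneq nab => t0; rewrite hb t0 addt0.
Qed.

Lemma uniq3 (T : eqType) (x y z : T) : uniq [:: x; y; z] -> [/\ x != y, y != z & z != x].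
Proof.
rewrite /= !inE !negb_or => /andP[/andP[h1 h2] /andP[h3 _]]; split => //.
by rewrite eq_sym.
Qed.

Lemma inl_ne (A B : eqType) (x y : A) : (inl x : A + B) != inl y -> x != y.
Proof. by apply: contra => /eqP ->. Qed.

Arguments rep : simpl never.
Arguments sol : simpl never.

Lemma inr_ne (A B : eqType) (x y : B) : (inr x : A + B) != inr y -> x != y.
Proof. by apply: contra => /eqP ->. Qed.

Lemma tri_AAA a b d L1 L2 L3 : tri (inl a) (inl b) (inl d) L1 L2 L3 -> False.
Proof.
case: L1 => [[p1 w1]|y1]; case: L2 => [[p2 w2]|y2]; case: L3 => [[p3 w3]|y3];
  rewrite /tri => /and8P[/uniq3[/inl_ne hab /inl_ne hbc /inl_ne hca] /uniq3[n12 n23 n31]] //=.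
move=> /eqP h1 /eqP h2 /eqP h3 /eqP h4 /eqP h5 /eqP h6.
have e1 := rep_eq (etrans h1 (esym h2)).
have e2 := rep_eq (etrans h3 (esym h4)).
have e3 := rep_eq (etrans h5 (esym h6)).
have t1 := shift_ne hab (etrans h1 (esym h2)).
have t2 := shift_ne hbc (etrans h3 (esym h4)).
have t3 := shift_ne hca (etrans h5 (esym h6)).
have q12 : p1 != p2.
  apply: contra n12 => /eqP pp; subst p2; by rewrite -h2 -h3.
have q23 : p2 != p3.
  apply: contra n23 => /eqP pp; subst p3; by rewrite -h4 -h5.
have q31 : p3 != p1.
  apply: contra n31 => /eqP pp; subst p3; by rewrite -h1 -h6.
apply: (ovoid (a:=a) q12 q23 q31 t1 t2 t3).
by rewrite -e1 -e2 -e3.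
Qed.

Lemma tri_AAS a b s L1 L2 L3 : tri (inl a) (inl b) (inr s) L1 L2 L3 -> False.
Proof.
case: s => z k.
case: L1 => [[p1 w1]|y1]; case: L2 => [[[z2|] w2]|y2]; case: L3 => [[[z3|] w3]|y3];
  rewrite /tri => /and8P[/uniq3[/inl_ne hab _ _] /uniq3[n12 n23 n31]] //=.
move=> /eqP h1 /eqP h2 /eqP h3 /andP[/eqP ez2 /eqP s2] /andP[/eqP ez3 /eqP s3] /eqP h6.
subst z2 z3.
have e1 := rep_eq (etrans h1 (esym h2)).
have t1 := shift_ne hab (etrans h1 (esym h2)).
have q : p1 != Some z.
  apply: contra n31 => /eqP pp; subst p1; by rewrite -h1 -h6.
move: s2; rewrite -h3 e1 sol_shift h6 s3 => /eqP.
rewrite -{2}[k]addr0 (can_eq (addKr k)) mulf_eq0 (negbTE t1) /=.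
case: p1 q {h1 h2 e1 n12 n23 n31 t1} => [[u' v']|] q; last by rewrite oner_eq0.
apply/negP; apply: N_neq0; case: z q {s3 h6 h3} => u v /= q.
apply: contraNT q; rewrite negb_or !negbK !subr_eq0 => /andP[/eqP -> /eqP ->].
by rewrite eqxx.
Qed.

Lemma tri_ASS a s1 s2 L1 L2 L3 : tri (inl a) (inr s1) (inr s2) L1 L2 L3 -> False.
Proof.
case: s1 s2 => z k [z' k'].
case: L1 => [[[z1|] w1]|y1]; case: L2 => [[[z2|] w2]|y2]; case: L3 => [[[z3|] w3]|y3];
  rewrite /tri => /and8P[/uniq3[_ n23 _] /uniq3[m12 m23 m31]] //=.
- move=> /eqP h1 /andP[/eqP e1 /eqP s1] /andP[/eqP e2 /eqP s2] /andP[/eqP e3 /eqP s3] _ _.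
  have ez : z = z' by rewrite -e2 -e3.
  have ek : k = k' by rewrite -s2 -s3 ez.
  by move: n23; rewrite ez ek eqxx.
- move=> /eqP h1 /andP[/eqP e1 _] /eqP e2 /eqP e3 /andP[/eqP e4 _] /eqP h6.
  by move: m31; subst; rewrite eqxx.
Qed.

Lemma two_solids s s' L : s != s' -> inc (inr s) L -> inc (inr s') L ->
  exists y, L = inr y /\ s.1 = y /\ s'.1 = y.
Proof.
case: s s' => z k [z' k']; case: L => [[[x|] w]|y] //=.
- move=> nss /andP[/eqP e1 /eqP s1] /andP[/eqP e2 /eqP s2]; exfalso.
  by move: nss; subst; rewrite eqxx.
- by move=> _ /eqP e1 /eqP e2; exists y.
Qed.

Lemma tri_SSS s1 s2 s3 L1 L2 L3 : tri (inr s1) (inr s2) (inr s3) L1 L2 L3 -> False.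
Proof.
rewrite /tri => /and8P[/uniq3[/inr_ne n12 /inr_ne n23 _] /uniq3[m12 _ _] i1 i2 i3 i4 _ _].
have [y1 [E1 [e1 e2]]] := two_solids n12 i1 i2.
have [y2 [E2 [e3 e4]]] := two_solids n23 i3 i4.
by move: m12; rewrite E1 E2 -e2 -e3 eqxx.
Qed.

Lemma no6 P1 P2 P3 L1 L2 L3 : tri P1 P2 P3 L1 L2 L3 -> False.
Proof.
case: P1 => [a|s1]; case: P2 => [b|s2]; case: P3 => [d|s3].
- exact: tri_AAA.
- exact: tri_AAS.
- by move/tri_rot/tri_rot; apply: tri_AAS.
- exact: tri_ASS.
- by move/tri_rot; apply: tri_AAS.
- by move/tri_rot; apply: tri_ASS.
- by move/tri_rot/tri_rot; apply: tri_ASS.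
- exact: tri_SSS.
Qed.


Definition G := (Pt + Ln)%type.
Definition eG (x y : G) : bool :=
  match x, y with
  | inl P, inr L => inc P L
  | inr L, inl P => inc P L
  | _, _ => false
  end.
Definition side (x : G) : bool := if x is inl _ then true else false.

Lemma eG_side x y : eG x y -> side y = ~~ side x.
Proof. by case: x => ?; case: y. Qed.

Lemma path_side x s : path eG x s -> side (last x s) = side x (+) odd (size s).
Proof.
elim: s x => [|y s IH] x /=; first by rewrite addbF.
by case/andP=> h p; rewrite IH // (eG_side h) addNb addbN.
Qed.

Lemma cycle_even cs : cycle eG cs -> ~~ odd (size cs).
Proof.
case: cs => [|x s] //= /path_side; rewrite last_rcons size_rcons /=.
by case: (side x); case: (odd (size s)).
Qed.

Lemma ne_of_uniq (T : eqType) (s : seq T) x y : uniq s -> x = y -> x \in s -> 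
  forall s1 s2, s = s1 ++ x :: s2 -> y \in s2 -> False.
Proof.
move=> u <- _ s1 s2 E ys2; move: u; rewrite E cat_uniq /= => /and3P[_ _ /andP[]].
by rewrite ys2.
Qed.

Lemma c4 (x1 x2 x3 x4 : G) : uniq [:: x1; x2; x3; x4] ->
  eG x1 x2 -> eG x2 x3 -> eG x3 x4 -> eG x4 x1 -> False.
Proof.
move=> u.
have n13 : x1 != x3 by apply: contraTneq u => ->; rewrite /= !inE !eqxx ?orbT.
have n24 : x2 != x4 by apply: contraTneq u => ->; rewrite /= !inE !eqxx ?orbT ?andbF.
case: x1 x2 x3 x4 n13 n24 {u} => [P1|L1] [P2|L2] [P3|L3] [P4|L4] //= n13 n24.
- move=> h1 h2 h3 h4; exact: (no4 (inl_ne n13) (inr_ne n24) h1 h2 h4 h3).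
- move=> h1 h2 h3 h4; exact: (no4 (inl_ne n24) (inr_ne n13) h1 h4 h2 h3).
Qed.

Lemma tri_of P1 P2 P3 L1 L2 L3 : P1 != P2 -> P2 != P3 -> P3 != P1 ->
  L1 != L2 -> L2 != L3 -> L3 != L1 -> inc P1 L1 -> inc P2 L1 -> inc P2 L2 ->
  inc P3 L2 -> inc P3 L3 -> inc P1 L3 -> tri P1 P2 P3 L1 L2 L3.
Proof.
move=> n1 n2 n3 m1 m2 m3 i1 i2 i3 i4 i5 i6; apply/and8P; split => //;
  rewrite /= !inE !negb_or ?andbT; apply/andP; split => //; apply/andP; split => //;
  by rewrite eq_sym.
Qed.

Lemma c6 (x1 x2 x3 x4 x5 x6 : G) : uniq [:: x1; x2; x3; x4; x5; x6] ->
  eG x1 x2 -> eG x2 x3 -> eG x3 x4 -> eG x4 x5 -> eG x5 x6 -> eG x6 x1 -> False.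
Proof.
move=> u.
have n13 : x1 != x3 by apply: contraTneq u => ->; rewrite /= !inE !eqxx ?orbT.
have n35 : x3 != x5 by apply: contraTneq u => ->; rewrite /= !inE !eqxx ?orbT ?andbF.
have n51 : x5 != x1 by apply: contraTneq u => ->; rewrite /= !inE !eqxx ?orbT ?andbF.
have n24 : x2 != x4 by apply: contraTneq u => ->; rewrite /= !inE !eqxx ?orbT ?andbF.
have n46 : x4 != x6 by apply: contraTneq u => ->; rewrite /= !inE !eqxx ?orbT ?andbF.
have n62 : x6 != x2 by apply: contraTneq u => ->; rewrite /= !inE !eqxx ?orbT ?andbF.
case: x1 x2 x3 x4 x5 x6 n13 n35 n51 n24 n46 n62 {u} =>
  [P1|L1] [P2|L2] [P3|L3] [P4|L4] [P5|L5] [P6|L6] //= n13 n35 n51 n24 n46 n62.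
- move=> h1 h2 h3 h4 h5 h6; apply: (@no6 P1 P3 P5 L2 L4 L6).
  by apply: tri_of => //; apply: inl_ne || apply: inr_ne.
- move=> h1 h2 h3 h4 h5 h6; apply: (@no6 P2 P4 P6 L3 L5 L1).
  by apply: tri_of => //; apply: inl_ne || apply: inr_ne.
Qed.

Lemma girthG cs : ucycle eG cs -> (3 <= size cs)%N -> (8 <= size cs)%N.
Proof.
case/andP=> cyc un h3; have ev := cycle_even cyc.
case: cs => [|x1 [|x2 [|x3 [|x4 [|x5 [|x6 [|x7 [|x8 s]]]]]]]] in cyc un h3 ev * => //=.
- move: cyc => /= /and5P[h1 h2 h3' h4 _]; exfalso; exact: (c4 un h1 h2 h3' h4).
- move: cyc => /= /and5P[h1 h2 h3' h4 /and3P[h5 h6 _]]; exfalso; exact: (c6 un h1 h2 h3' h4 h5 h6).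
Qed.


Definition Fx := {x : F | x != 0}.
Definition TP1 := (F * F * Fx * F)%type.
Definition TP2 := (F * Fx * F)%type.
Definition TL1a := (F * Fx * (F * F * F))%type.
Definition TL1b := (option F * (F * Fx * F))%type.
Definition TL2 := (F * Fx)%type.
Definition Vt := ((TP1 + TP2) + ((TL1a + TL1b) + TL2))%type.

Definition toA (p : TP1) : A4 := (p.1.1.1, p.1.1.2, val p.1.2, p.2).

Definition toG (x : Vt) : G :=
  match x with
  | inl (inl p) => inl (inl (toA p))
  | inl (inr p) => inl (inr ((p.1.1, val p.1.2), p.2))
  | inr (inl (inl l)) => inr (inl (Some (l.1.1, val l.1.2), l.2))
  | inr (inl (inr l)) => inr (inl (omap (fun u => (u, 0)) l.1, (l.2.1.1, val l.2.1.2, l.2.2)))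
  | inr (inr l) => inr (inr (l.1, val l.2))
  end.

Lemma toG_inj : injective toG.
Proof.
case=> [[[[[a0 a1] a2] a3]|[[u v] k]]|[[[[u v] w]|[o [[w1 w2] w3]]]|[u v]]];
case=> [[[[[b0 b1] b2] b3]|[[u' v'] k']]|[[[[u' v'] w']|[o' [[w1' w2'] w3']]]|[u' v']]] //=;
  rewrite /toA /=.
- by case=> -> -> /val_inj -> ->.
- by case=> -> /val_inj -> ->.
- by case=> -> /val_inj -> ->.
- case: o' => [x|] //= [_ E]; exfalso; by case: v E => /= x0 hx0 E; rewrite E eqxx in hx0.
- case: o => [x|] //= [_ E]; exfalso; by case: v' E => /= x0 hx0 E; rewrite -E eqxx in hx0.
- case: o o' => [x|] [y|] //=; first by case=> -> -> /val_inj -> ->.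
  by case=> -> /val_inj -> ->.
- by case=> -> /val_inj ->.
Qed.

Definition e : rel Vt := fun x y => eG (toG x) (toG y).


Lemma deg_param (I : finType) x (f : I -> Vt) : injective f ->
  (forall i, e x (f i)) -> (forall y, e x y -> exists i, y = f i) -> deg e x = #|I|.
Proof.
move=> fi h1 h2; rewrite /deg.
have -> : [set y | e x y] = f @: [set: I].
  apply/setP => y; rewrite inE; apply/idP/imsetP.
  - by move/h2 => [i ->]; exists i; rewrite ?inE.
  - by case=> i _ ->.
by rewrite card_imset // cardsT.
Qed.


Lemma deg_P1 (a : TP1) : deg e (inl (inl a)) = #|{: (F * Fx) + option F}|.
Proof.
case: a => [[[a0 a1] a2] a3].
pose A := toA (a0, a1, a2, a3).
pose f (i : ((F * Fx) + option F)%type) : Vt :=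
  match i with
  | inl uv => inr (inl (inl (uv, rep A (Some (uv.1, val uv.2)))))
  | inr o => inr (inl (inr (o, (match o with Some u => a1 - a0 * u | None => a1 end, a2,
                               match o with Some u => a3 - a0 * N u 0 | None => a0 end))))
  end.
apply: (@deg_param _ _ f).
- case=> [[u v]|o] [[u' v']|o'] //=.
  + by case=> -> ->.
  + by case=> ->.
- case=> [[u v]|[u|]]; rewrite /e /= ?eqxx //.
  + by rewrite /rep /toA /= mulr0 subr0 eqxx.
- case=> [[p|p]|[[l|l]|l]]; rewrite /e //=.
  + case: l => [[u v] w] /= /eqP E; exists (inl (u, v)); by rewrite /= E.
  + case: l => [[u|] [[w1 w2] w3]]; rewrite /rep /toA /= => /eqP [E1 E2 E3].
    * exists (inr (Some u)); rewrite /= E1 E3; congr (inr (inl (inr (_, (_, _, _))))).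
      by apply: val_inj; rewrite /= -E2 mulr0 subr0.
    * exists (inr None); rewrite /= E1 E3; congr (inr (inl (inr (_, (_, _, _))))).
      by apply: val_inj; rewrite /= -E2.
Qed.


Lemma deg_P2 (p : TP2) : deg e (inl (inr p)) = #|{: option (F * F)}|.
Proof.
case: p => [[u v] k].
pose f (i : option (F * F)) : Vt :=
  match i with
  | Some w => inr (inl (inl ((u, v), (w.1, w.2, k + BN u (val v) w.1 w.2))))
  | None => inr (inr (u, v))
  end.
apply: (@deg_param _ _ f).
- case=> [[w1 w2]|] [[w1' w2']|] //=.
  by case=> -> ->.
- case=> [[w1 w2]|]; rewrite /e /= ?eqxx //=.
  by rewrite /sol /= addrK eqxx.
- case=> [[q|q]|[[l|l]|l]]; rewrite /e //=.
  + case: l => [[u' v'] [[w1 w2] w3]] /= /andP[/eqP [E1 E2] /eqP E3].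
    exists (Some (w1, w2)); rewrite /= E1 (val_inj E2) -E3 /sol /=.
    by congr (inr (inl (inl (_, (_, _, _))))); rewrite subrK.
  + case: l => [[u'|] [[w1 w2] w3]] //= /andP[/eqP [E1 E2] _].
    by exfalso; clear f; case: v E2 => /= x0 hx0 E2; rewrite -E2 eqxx in hx0.
  + case: l => u' v' /= /eqP [E1 E2]; exists None.
    by rewrite /= E1 (val_inj E2).
Qed.

Lemma deg_L2 (l : TL2) : deg e (inr (inr l)) = #|{: F}|.
Proof.
case: l => u v.
pose f (k : F) : Vt := inl (inr ((u, v), k)).
apply: (@deg_param _ _ f).
- by move=> k k' [].
- by move=> k; rewrite /e /= eqxx.
- case=> [[q|q]|[[l|l]|l]]; rewrite /e //=.
  case: q => [[u' v'] k] /= /eqP [E1 E2]; exists k.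
  by rewrite /f -E1 (val_inj E2).
Qed.

Lemma deg_L1b (l : TL1b) : deg e (inr (inl (inr l))) = #|{: F}|.
Proof.
case: l => [o [[w1 w2] w3]].
pose f (t : F) : Vt := inl (inl (match o with
   | Some u => (t, w1 + t * u, w2, w3 + t * N u 0)
   | None => (w3, w1, w2, t) end)).
apply: (@deg_param _ _ f).
- move=> t t'; rewrite /f; clear f; case: o => [u|]; by case.
- move=> t; rewrite /e /f; clear f; case: o => [u|]; rewrite /rep /toA /=.
  + apply/eqP; rewrite /rep /toA /=; congr (_, _, _); ring.
  + by rewrite eqxx.
- case=> [[q|q]|[[l|l]|l]]; rewrite /e //=.
  + case: q => [[[a0 a1] a2] a3]; rewrite /f; clear f; case: o => [u|]; rewrite /rep /toA /= => /eqP [E1 E2 E3].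
    * exists a0; rewrite -E1 -E3; congr (inl (inl (_, _, _, _))).
      - ring.
      - by apply: val_inj; rewrite /= -E2 mulr0 subr0.
      - ring.
    * exists a3; rewrite -E1 -E3; congr (inl (inl (_, _, _, _))).
      by apply: val_inj; rewrite /= -E2.
  + case: q => [[u' v'] k]; rewrite /f; clear f; case: o => [u|] //= /andP[/eqP [E1 E2] _].
    by exfalso; case: v' E2 => /= x0 hx0 E2; rewrite E2 eqxx in hx0.
Qed.

Lemma deg_L1a (l : TL1a) : deg e (inr (inl (inl l))) = #|{: option Fx}|.
Proof.
case: l => [[u v] [[w1 w2] w3]].
have vn0 : val v != 0 := valP v.
pose f (i : option Fx) : Vt :=
  match i with
  | Some s => let t := (val s - w2) / val v in inl (inl (t, w1 + t * u, s, w3 + t * N u (val v)))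
  | None => inl (inr ((u, v), sol (u, val v) (w1, w2, w3)))
  end.
apply: (@deg_param _ _ f).
- case=> [s|] [s'|] //=; first by case=> _ _ ->.
- case=> [s|]; rewrite /e /rep /toA /= ?eqxx //.
  apply/eqP; rewrite /rep /toA /=; congr (_, _, _); [ring | | ring].
  by rewrite divfK // subKr.
- case=> [[q|q]|[[l|l]|l]]; rewrite /e //=.
  + case: q => [[[a0 a1] a2] a3]; rewrite /rep /toA /= => /eqP [E1 E2 E3].
    exists (Some a2) => /=.
    have ha0 : a0 = (val a2 - w2) / val v.
      by rewrite -E2 opprB addrC subrK mulfK.
    rewrite -ha0 -E1 -E3; congr (inl (inl (_, _, _, _))); ring.
  + case: q => [[u' v'] k] /= /andP[/eqP [E1 E2] /eqP E3]; exists None.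
    by rewrite /= -E3 E1 (val_inj E2).
Qed.


Lemma card_Fx : #|{: Fx}| = #|F|.-1.
Proof. by rewrite card_sig; exact: cardC1. Qed.

Lemma e_sym : symmetric e.
Proof. by move=> x y; rewrite /e; case: (toG x) => ?; case: (toG y). Qed.

Lemma e_irr : irreflexive e.
Proof. by move=> x; rewrite /e; case: (toG x). Qed.

Lemma girthV cs : is_cycle e cs -> (8 <= size cs)%N.
Proof.
case=> h3 /andP[cy un]; rewrite -(size_map toG); apply: girthG.
  by rewrite /ucycle cycle_map map_inj_uniq ?cy ?un //; exact: toG_inj.
by rewrite size_map.
Qed.

Definition one' : Fx := exist _ 1 (oner_neq0 F).

Definition sigf (x : Vt) : bool * bool * bool :=
  match x with
  | inl (inl p) => (true, p.1.1.1 == 0, p.2 == 0)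
  | inr (inl (inr l)) => (false, isSome l.1, l.2.2 == 0)
  | _ => (false, false, false)
  end.

Lemma cycle8 : exists cs, is_cycle e cs /\ size cs = 8%N.
Proof.
pose X : Vt := inl (inl (0, 0, one', 0)).
pose Y1 : Vt := inl (inl (1, 0, one', 0)).
pose Z : Vt := inl (inl (1, 0, one', 1)).
pose Y2 : Vt := inl (inl (0, 0, one', 1)).
pose L1 : Vt := inr (inl (inr (Some 0, (0, one', 0)))).
pose L2 : Vt := inr (inl (inr (None, (0, one', 1)))).
pose L3 : Vt := inr (inl (inr (Some 0, (0, one', 1)))).
pose L4 : Vt := inr (inl (inr (None, (0, one', 0)))).
exists [:: X; L1; Y1; L2; Z; L3; Y2; L4]; split => //; split => //.
apply/andP; split.
  rewrite /= /e /= /rep /toA /= /N.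
  by rewrite !(mulr0, mul0r, subr0, addr0, mulr1, mul1r, eqxx).
apply: (@map_uniq _ _ sigf).
by rewrite /= !eqxx oner_eq0.
Qed.


Lemma card_F_gt0 : (0 < #|F|)%N.
Proof. by apply/card_gt0P; exists 0. Qed.

Lemma main_graph : bipartite_biregular e #|F| (#|F| ^ 2 + 1) 8.
Proof.
have q0 := card_F_gt0.
split; first by split; [exact: e_sym | exact: e_irr].
exists [set x | ~~ side (toG x)].
split; [|split; [|split]].
- by move=> x y exy; rewrite !inE (eG_side exy) negbK; case: (side _).
- case=> [[p|p]|[[l|l]|l]]; rewrite inE //= => _.
  + by rewrite deg_L1a card_option card_Fx prednK.
  + by rewrite deg_L1b.
  + by rewrite deg_L2.
- case=> [[p|p]|[[l|l]|l]]; rewrite inE //= => _.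
  + rewrite deg_P1 card_sum card_prod card_option card_Fx.
    case: #|F| q0 => // m _ /=; rewrite expnS expn1; nia.
  + by rewrite deg_P2 card_option card_prod expnS expn1 addn1.
- split; first exact: cycle8.
  exact: girthV.
Qed.


Lemma card_Vt : #|{: Vt}| = ((#|F| ^ 2 + #|F| + 1) * (#|F| ^ 3 - #|F|))%N.
Proof.
have q0 := card_F_gt0.
rewrite !card_sum !card_prod card_option card_Fx.
case: #|F| q0 => // m _ /=.
have -> : (m.+1 ^ 3 - m.+1 = m.+1 * m * m.+2)%N.
  rewrite !expnS expn0 muln1.
  have -> : (m.+1 * (m.+1 * m.+1) = m.+1 * m * m.+2 + m.+1)%N by nia.
  by rewrite addnK.
rewrite !expnS expn0; nia.
Qed.

End Geo.

Lemma exists_c (F : finFieldType) : exists c : F, forall x, x * x + x + c != 0.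
Proof.
case: (boolP [exists c : F, [forall x : F, x * x + x + c != 0]]).
  by case/existsP=> c /forallP h; exists c.
move/existsPn=> nb; exfalso.
have ex : forall c : F, exists x, x * x + x + c == 0.
  by move=> c; have /forallPn [x] := nb c; rewrite negbK => h; exists x.
pose g c := xchoose (ex c).
have gP c : c = - (g c * g c + g c).
  have /eqP h := xchooseP (ex c); apply/eqP; rewrite -subr_eq0 opprK addrC.
  by rewrite /g h.
have ginj : injective g by move=> c c' E; rewrite (gP c) (gP c') E.
have [c0 E0] := codomP (inj_card_onto ginj (leqnn _) 0).
have [c1 E1] := codomP (inj_card_onto ginj (leqnn _) (-1)).
have : c0 = c1 by rewrite (gP c0) (gP c1) -E0 -E1; ring.
move=> E; move: E1; rewrite -E -E0 => /eqP; rewrite oppr_eq0 oner_eq0.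
done.
Qed.

Close Scope ring_scope.

Theorem mainTheorem10 (q : nat) :
  prime_power q ->
  exists (V : finType) (e : rel V),
    bipartite_biregular e q (q ^ 2 + 1) 8 /\
    #|V| = (q ^ 2 + q + 1) * (q ^ 3 - q).
Proof.
case=> p [k [pp [k0 ->]]].
have [F _ cF] := pPrimePowerField pp k0.
have [c Hc] := exists_c F.
exists (Vt F), (e c); rewrite -cF; split; [exact: main_graph Hc | exact: card_Vt].
Qed.
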